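(* Let $F$ be an augmentation of a tree $T$. Then $\mathrm{ex}(n,F^3)\le 3(|T|+1)n^2$ for all sufficiently large $n$.
   Context: $|T|$ is the number of edges of $T$. A graph $F$ is an augmentation of a tree $T$ if $F$ is obtained from $T$ by adding one new edge (whose endpoints need not lie in $V(T)$). The expansion $F^3$ is the $3$-graph obtained from $F$ by adding to each edge a new vertex, distinct edges receiving distinct new vertices. $\mathrm{ex}(n,F^3)$ is the maximum number of edges in an $n$-vertex $3$-graph containing no copy of $F^3$. *)

(* Defs.v *)
From mathcomp Require Import all_boot.
Set Implicit Arguments. Unset Strict Implicit. Unset Printing Implicit Defensive.

Definition tadj (V : finType) (ET : {set {set V}}) : rel V :=
  fun x y => [set x; y] \in ET.

Definition is_tree (V : finType) (VT : {set V}) (ET : {set {set V}}) : Prop :=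
  [/\ VT != set0,
      (forall A, A \in ET -> #|A| = 2 /\ A \subset VT),
      (forall x y, x \in VT -> y \in VT -> connect (tadj ET) x y) &
      (forall s : seq V, uniq s -> 3 <= size s -> ~~ cycle (tadj ET) s)].

(* F = (V, E) (vertex set = all of V) is an augmentation of the tree
   T = (VT, ET): E = ET plus one new edge e, V(F) = VT u e. *)
Definition is_augmentation (V : finType) (E : {set {set V}})
    (VT : {set V}) (ET : {set {set V}}) : Prop :=
  is_tree VT ET /\
  exists e : {set V},
    [/\ #|e| = 2, e \notin ET, E = e |: ET & [set: V] = VT :|: e].

(* Vertex type of the expansion F^3: old vertices plus one new vertex per edge. *)
Definition exp_vert (V : finType) (E : {set {set V}}) : finType :=
  (V + {A : {set V} | A \in E})%type.

Definition expansion (V : finType) (E : {set {set V}}) : {set {set exp_vert E}} :=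
  [set (inl @: val a) :|: [set inr a] | a : {A : {set V} | A \in E}].

Definition uniform3 (n : nat) (H : {set {set 'I_n}}) : bool :=
  [forall A in H, #|A| == 3].

Definition hcontains (U : finType) (G : {set {set U}}) (n : nat)
    (H : {set {set 'I_n}}) : bool :=
  [exists f : {ffun U -> 'I_n}, injectiveb f && [forall A in G, (f @: A) \in H]].

Definition ex3 (U : finType) (G : {set {set U}}) (n : nat) : nat :=
  \max_(H : {set {set 'I_n}} | uniform3 H && ~~ hcontains G H) #|H|.

(* Main.v *)
Require Import Defs.
From mathcomp Require Import all_boot.
From mathcomp Require Import zify.
Set Implicit Arguments. Unset Strict Implicit. Unset Printing Implicit Defensive.


Section Hyp.
Variable n : nat.
Implicit Types H : {set {set 'I_n}}.

Definition codeg H (p q : 'I_n) := #|[set B in H | (p \in B) && (q \in B)]|.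
Definition pairs H := [set pq : 'I_n * 'I_n | (pq.1 != pq.2) && (0 < codeg H pq.1 pq.2)].
Definition good d H := forall p q, p != q -> 0 < codeg H p q -> d <= codeg H p q.
Definition Wt H (p q : 'I_n) := [set w | [&& w != p, w != q & [set p; q; w] \in H]].

Lemma codeg_sub H1 H2 p q : H1 \subset H2 -> codeg H1 p q <= codeg H2 p q.
Proof.
move=> s; apply: subset_leq_card; apply/subsetP=> B; rewrite !inE => /andP[/(subsetP s) -> ->] //.
Qed.

Lemma clean d : forall k H, #|pairs H| <= k -> d * k < #|H| ->
  exists H', [/\ H' \subset H, H' != set0 & good d H'].
Proof.
elim=> [|k IH] H hp hH.
- exists H; split=> //; first by rewrite -card_gt0; lia.
  move=> p q pq c0; case: leqP => // cd.
  have : (p, q) \in pairs H by rewrite inE /= pq c0.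
  by move=> pin; move: hp; rewrite leqn0 => /eqP/cards0_eq => h; rewrite h inE in pin.
- case: (boolP [exists p, exists q, [&& p != q, 0 < codeg H p q & codeg H p q < d]]).
  + case/existsP=> p /existsP[q] /and3P[pq c0 cd].
    set S := [set B : {set 'I_n} | (p \in B) && (q \in B)].
    have eqc : codeg H p q = #|H :&: S| by rewrite /codeg setIdE.
    have hc := cardsID S H.
    have sub : H :\: S \subset H by apply: subsetDl.
    have pr : pairs (H :\: S) \proper pairs H.
      apply/properP; split.
        apply/subsetP=> [[u v]]; rewrite !inE /= => /andP[-> c]; rewrite /=.
        by apply: leq_trans c (codeg_sub _ _ sub).
      exists (p, q); first by rewrite inE /= pq c0.
      rewrite inE /= pq /= -leqNgt leqn0 cards_eq0; apply/eqP/setP=> B.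
      by rewrite !inE; case: (p \in B); case: (q \in B); rewrite ?andbF ?andbT.
    have := proper_card pr => hlt.
    have h1 : #|pairs (H :\: S)| <= k by lia.
    have h2 : d * k < #|H :\: S|.
      rewrite mulnS in hH; move: hH; set m := d * k; rewrite -hc -eqc. move: cd. set c := codeg H p q. set z := #|H :\: S|. move=> cd hH. lia.
    have [H' [s1 s2 s3]] := IH (H :\: S) h1 h2.
    exists H'; split=> //; exact: subset_trans s1 sub.
  + move=> /existsPn nex; exists H; split=> //; first by rewrite -card_gt0; lia.
    move=> p q pq c0; case: leqP => // cd.
    by move: (nex p) => /existsPn /(_ q); rewrite pq c0 cd.
Qed.

Lemma third (B : {set 'I_n}) p q : #|B| = 3 -> p != q -> p \in B -> q \in B ->
  exists w, [/\ w != p, w != q & B = [set p; q; w]].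
Proof.
move=> c3 pq pB qB.
have : #|B :\ p :\ q| == 1.
  have := cardsD1 p B; have := cardsD1 q (B :\ p); rewrite pB !inE eq_sym pq qB /= c3 => h1 h2; rewrite h1 in h2; apply/eqP; lia.
case/cards1P=> w hw.
have wB : w \in B :\ p :\ q by rewrite hw inE.
move: (wB); rewrite !inE => /and3P[wq wp _].
exists w; split=> //; apply/setP=> z; rewrite !inE.
case: (eqVneq z p) => [->|zp] //=; case: (eqVneq z q) => [->|zq] //=.
have : (z \in B :\ p :\ q) = (z \in B) by rewrite !inE zp zq.
by rewrite hw inE => <-.
Qed.

Lemma codeg_W H p q : uniform3 H -> p != q -> codeg H p q <= #|Wt H p q|.
Proof.
move=> /forall_inP u3 pq.
apply: leq_trans (leq_imset_card (fun w => [set p; q; w]) _).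
apply: subset_leq_card; apply/subsetP=> B; rewrite inE => /andP[BH /andP[pB qB]].
have [w [wp wq eB]] := third (eqP (u3 B BH)) pq pB qB.
apply/imsetP; exists w => //; rewrite inE wp wq /= -eB //.
Qed.

End Hyp.

Section Forest.
Variable V : finType.
Variable r : rel V.
Hypothesis rsym : symmetric r.
Hypothesis rirr : irreflexive r.
Hypothesis racyc : forall s : seq V, uniq s -> 3 <= size s -> ~~ cycle r s.

Lemma leaf (D : {set V}) : D != set0 -> exists2 v, v \in D & #|[set w in D | r v w]| <= 1.
Proof.
move=> D0.
case: (boolP [exists v in D, #|[set w in D | r v w]| <= 1]).
  by case/exists_inP=> v vD h; exists v.
move/exists_inPn=> all2.
have two : forall v, v \in D -> forall y, exists2 z, z \in D & r v z && (z != y).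
  move=> v vD y; have := all2 v vD; rewrite -ltnNge => h.
  have : 0 < #|[set w in D | r v w] :\ y| by have := cardsD1 y [set w in D | r v w]; lia.
  rewrite card_gt0 => /set0Pn[z]; rewrite !inE => /andP[zy /andP[zD rz]].
  by exists z => //; rewrite rz zy.
have grow : forall i, exists x s, [/\ uniq (x :: s), path r x s, {subset x :: s <= D} & size s = i.+1].
  elim=> [|i [x [s [u p sD sz]]]].
    case/set0Pn: D0 => x xD; have [z zD /andP[rz _]] := two x xD x.
    exists x, [:: z]; split=> //=.
      by rewrite inE andbT; apply/eqP=> e; move: rz; rewrite e rirr.
      by rewrite rz.
    by move=> w; rewrite !inE => /orP[/eqP->|/eqP->].
  case: s u p sD sz => [//|y s'] u p sD sz.
  have [z zD /andP[rz zy]] := two x (sD x (mem_head _ _)) y.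
  case: (boolP (z \in x :: y :: s')) => zin.
    exfalso.
    have zx : z != x by apply/eqP=> e; move: rz; rewrite e rirr.
    move: zin; rewrite !inE (negbTE zx) (negbTE zy) /= => zs.
    move: u p; case/splitPr: zs => s1 s2 u p.
    have U : uniq (x :: y :: rcons s1 z).
      apply: subseq_uniq u.
      by rewrite -cats1 -!cat_cons -[_ ++ z :: s2]/(_ ++ [:: z] ++ s2) catA prefix_subseq.
    have := racyc U; rewrite /= size_rcons => /(_ isT).
    move: p; rewrite /= cat_path /= => /andP[rxy /andP[p1 /andP[rz' _]]].
    by rewrite !rcons_path p1 rz' last_rcons rxy (rsym z x) rz.
  exists z, (x :: y :: s'); split=> //=.
  - by rewrite zin.
  - by rewrite (rsym z x) rz.
  - by move=> w; rewrite inE => /orP[/eqP->//|]; apply: sD.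
  - by case: sz => ->.
have [x [s [u _ sD sz]]] := grow #|D|.
have sub : {subset x :: s <= enum D} by move=> w wi; rewrite mem_enum; apply: sD.
have := uniq_leq_size u sub.
by rewrite -cardE /= sz; lia.
Qed.

Lemma avoid (U : finType) (B C : {set U}) : #|B| < #|C| -> exists2 y, y \in C & y \notin B.
Proof.
move=> lt; case: (boolP (C \subset B)) => [/subset_leq_card|]; first by lia.
by case/subsetPn=> y yC yB; exists y.
Qed.

Lemma forest_embed (U : finType) (h : rel U) (A : {set U}) (k : nat) :
  symmetric h -> k < #|A| -> (forall u, u \in A -> k <= #|[set w in A | h u w]|) ->
  forall D : {set V}, #|D| <= k -> exists f : V -> U,
    [/\ {in D &, injective f}, {in D, forall v, f v \in A} &
        {in D &, forall u w, r u w -> h (f u) (f w)}].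
Proof.
move=> hsym kA deg.
have [u0 _ _] : exists2 u0, u0 \in A & true.
  by have [y yA _] := avoid (B := set0) (C := A) ltac:(rewrite cards0; lia); exists y.
suff : forall m (D : {set V}), #|D| <= m -> #|D| <= k -> exists f : V -> U,
    [/\ {in D &, injective f}, {in D, forall v, f v \in A} &
        {in D &, forall u w, r u w -> h (f u) (f w)}].
  by move=> H D Dk; exact: H _ _ (leqnn _) Dk.
elim=> [|m IH] D Dm Dk.
  exists (fun _ => u0); move: Dm; rewrite leqn0 cards_eq0 => /eqP ->.
  by split=> [x|x|x]; rewrite inE.
case: (set_0Vmem D) => [->|[v0 v0D]].
  by exists (fun _ => u0); split=> [x|x|x]; rewrite inE.
have [v vD lv] := leaf (D := D) ltac:(by apply/set0Pn; exists v0).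
have cD := cardsD1 v D; rewrite vD in cD.
have [f0 [i0 a0 e0]] := IH (D :\ v) ltac:(lia) ltac:(lia).
have cim := leq_imset_card f0 (D :\ v).
set N := [set w in D | r v w] in lv.
have [C [CA Ck CN]] : exists C : {set U}, [/\ C \subset A, k <= #|C| &
    forall u, u \in N -> forall y, y \in C -> h (f0 u) y].
  case: (set_0Vmem N) => [N0|[u uN]].
    by exists A; split=> //; [exact: ltnW | move=> u; rewrite N0 inE].
  have uD' : u \in D :\ v.
    move: uN; rewrite !inE => /andP[-> rvu]; rewrite andbT.
    by apply/eqP=> e; move: rvu; rewrite e rirr.
  exists [set w in A | h (f0 u) w]; split.
  - by apply/subsetP=> w; rewrite inE => /andP[].
  - exact: deg (a0 _ uD').
  - move=> u' u'N y; rewrite inE => /andP[_].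
    by have := card_le1_eqP lv u' u u'N uN => ->.
have [y yC yim] := avoid (B := f0 @: (D :\ v)) (C := C) ltac:(lia).
have yA : y \in A by apply: (subsetP CA).
exists (fun z => if z == v then y else f0 z).
have key : forall w, w \in D -> r v w -> h y (f0 w) /\ w \in D :\ v.
  move=> w wD rvw.
  have wv : w != v by apply/eqP=> e; move: rvw; rewrite e rirr.
  split; last by rewrite !inE wv.
  by rewrite hsym; apply: CN yC; rewrite inE wD.
split.
- move=> z1 z2 z1D z2D /=.
  case: (eqVneq z1 v) => [->|z1v]; case: (eqVneq z2 v) => [->|z2v] //.
  + move=> e; exfalso; move/negP: yim; apply; rewrite e; apply/imsetP; exists z2 => //.
    by rewrite !inE z2v.
  + move=> e; exfalso; move/negP: yim; apply; rewrite -e; apply/imsetP; exists z1 => //.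
    by rewrite !inE z1v.
  + by apply: i0; rewrite !inE ?z1v ?z2v.
- by move=> z zD /=; case: eqP => // /eqP zv; apply: a0; rewrite !inE zv.
- move=> z1 z2 z1D z2D rz /=.
  case: (eqVneq z1 v) => [e1|z1v]; case: (eqVneq z2 v) => [e2|z2v].
  + by move: rz; rewrite e1 e2 rirr.
  + by rewrite -e1 in key; have [] := key z2 z2D rz.
  + rewrite -e2 in key; rewrite hsym; have [] := key z1 z1D _ => //.
    by rewrite rsym.
  + by apply: e0 => //; rewrite !inE ?z1v ?z2v.
Qed.

End Forest.

Lemma pick_thirds n (H : {set {set 'I_n}}) (x0 : 'I_n) (V : finType) (E : {set {set V}}) (f : V -> 'I_n) :
  (forall A, A \in E -> exists p q, [/\ p != q, f @: A = [set p; q] &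
                                     #|V| + #|E| <= #|Wt H p q| + 1]) ->
  exists g : {A | A \in E} -> 'I_n,
    [/\ injective g, forall a : {A | A \in E}, g a \notin f @: [set: V] &
        forall a : {A | A \in E}, f @: val a :|: [set g a] \in H].
Proof.
move=> hyp.
suff : forall s : seq {A | A \in E}, size s <= #|E| -> exists g : {A | A \in E} -> 'I_n,
    [/\ {in s &, injective g}, forall a, a \in s -> g a \notin f @: [set: V] &
        forall a, a \in s -> f @: val a :|: [set g a] \in H].
  move=> /(_ (enum {: {A | A \in E}})).
  have -> : size (enum {: {A | A \in E}}) = #|E|.
    rewrite -cardE card_sig; by apply: eq_card.
  case=> // g [gi g1 g2]; exists g; split.
  - by move=> a b; apply: gi; rewrite mem_enum.
  - by move=> a; apply: g1; rewrite mem_enum.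
  - by move=> a; apply: g2; rewrite mem_enum.
elim=> [|a s IH] sz.
  by exists (fun _ => x0); split=> // a; rewrite in_nil.
have [g [gi g1 g2]] := IH (leq_trans (leqnSn _) sz).
have [p [q [pq fa cW]]] := hyp (val a) (valP a).
have pim : p \in f @: [set: V].
  have pa : p \in f @: val a by rewrite fa !inE eqxx.
  exact: (subsetP (imsetS f (subsetT (val a)))).
have c1 := cardsD1 p (f @: [set: V]); rewrite pim /= add1n in c1.
have c2 := leq_imset_card f [set: V]; rewrite cardsT in c2.
have c3 := leq_imset_card g [set b in s].
have c4 : #|[set b in s]| <= size s by rewrite cardsE; apply: card_size.
have c5 := leq_of_leqif (leq_card_setU ((f @: [set: V]) :\ p) [set g b | b in [set b in s]]).
have hlt : #|((f @: [set: V]) :\ p) :|: [set g b | b in [set b in s]]| < #|Wt H p q|.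
  apply: (leq_ltn_trans c5); apply: (leq_ltn_trans (leq_add (leqnn _) (leq_trans c3 c4))).
  move: sz => /= sz; move: c2; rewrite c1 => c2.
  have := leq_trans (leq_add c2 sz) cW. rewrite addSn addnS addn1 !ltnS. by [].
have [y yW yn] := avoid hlt.
move: yW; rewrite inE => /and3P[yp yq yH].
move: yn; rewrite !inE yp /= negb_or => /andP[yf yg].
exists (fun b => if b == a then y else g b); split.
- move=> b1 b2; rewrite !inE.
  case: (eqVneq b1 a) => [->|b1a]; case: (eqVneq b2 a) => [->|b2a] //= h1 h2 e.
  + by move/negP: yg; case; rewrite e; apply/imsetP; exists b2; rewrite ?inE.
  + by move/negP: yg; case; rewrite -e; apply/imsetP; exists b1; rewrite ?inE.
  + exact: gi.
- move=> b; rewrite inE; case: (eqVneq b a) => [_|ba] //= bs; exact: g1.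
- move=> b; rewrite inE; case: (eqVneq b a) => [->|ba] /=.
    by move=> _; rewrite fa.
  by move=> bs; exact: g2.
Qed.

Lemma tree_size (V : finType) (VT : {set V}) (ET : {set {set V}}) :
  is_tree VT ET -> #|VT| <= 2 * #|ET| + 1.
Proof.
case=> _ ETe conn _.
case: (leqP #|VT| 1) => [h|h]; first by lia.
have sub : VT \subset \bigcup_(A in ET) A.
  apply/subsetP=> x xVT.
  have : 0 < #|VT :\ x| by have := cardsD1 x VT; rewrite xVT /=; lia.
  rewrite card_gt0 => /set0Pn[y]; rewrite !inE => /andP[yx yVT].
  have := conn x y xVT yVT => /connectP[[|z p]] /=.
    by move=> _ e; rewrite e eqxx in yx.
  move=> /andP[xz _] _; apply/bigcupP; exists [set x; z] => //.
  by rewrite !inE eqxx.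
have := subset_leq_card sub.
have : #|\bigcup_(A in ET) A| <= \sum_(A in ET) #|A|.
  apply: (big_ind2 (fun (X : {set V}) s => #|X| <= s)) => //.
  - by rewrite cards0.
  - move=> X1 s1 X2 s2 h1 h2; apply: leq_trans (leq_of_leqif (leq_card_setU _ _)) _.
    exact: leq_add.
have -> : \sum_(A in ET) #|A| = \sum_(A in ET) 2.
  by apply: eq_bigr => A /ETe [].
rewrite sum_nat_const; lia.
Qed.

Lemma embed_main (V : finType) (E : {set {set V}}) (VT : {set V}) (ET : {set {set V}})
  n (H : {set {set 'I_n}}) :
  is_augmentation E VT ET -> uniform3 H -> 3 * (#|ET| + 1) * n ^ 2 < #|H| ->
  hcontains (expansion E) H.
Proof.
move=> [tr [e [ce eET EE Ve]]] u3 big.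
have ts := tree_size tr.
case: tr => _ ETe _ acyc.
have cV : #|V| <= #|VT| + 2.
  rewrite -cardsT Ve -ce; exact: leq_of_leqif (leq_card_setU _ _).
set d := #|V| + #|ET|.
have pn : forall H0 : {set {set 'I_n}}, #|pairs H0| <= n * n.
  by move=> H0; apply: leq_trans (max_card _) _; rewrite card_prod card_ord.
have dH : d * (n * n) < #|H|.
  apply: (leq_ltn_trans _ big); rewrite mulnn; apply: leq_mul => //; rewrite /d; lia.
have [H' [sH H'0 gd]] := clean (pn H) dH.
have u3' : uniform3 H'.
  by apply/forall_inP => B BH; exact: (forall_inP u3) B (subsetP sH B BH).
have cpos : forall B p q, B \in H' -> p \in B -> q \in B -> 0 < codeg H' p q.
  move=> B p q BH pB qB; rewrite /codeg card_gt0; apply/set0Pn; exists B.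
  by rewrite inE BH pB qB.
case/set0Pn: H'0 => B0 B0H.
have c3 : #|B0| = 3 by apply/eqP; exact: (forall_inP u3') B0 B0H.
have [x xB] : exists x, x \in B0.
  by apply/set0Pn; rewrite -card_gt0 c3.
have [y yB] : exists y, y \in B0 :\ x.
  by apply/set0Pn; rewrite -card_gt0; have := cardsD1 x B0; rewrite xB c3; lia.
move: yB; rewrite !inE => /andP[yx yB].
set Aset := [set z | (z != x) && (0 < codeg H' x z)].
set hadj := fun u w : 'I_n => [&& u != x, w != x, u != w & [set x; u; w] \in H'].
have hsym : symmetric hadj.
  move=> u w; rewrite /hadj (eq_sym u w) setUAC.
  by case: (u != x); case: (w != x).
have deg : forall u, u \in Aset -> d <= #|[set w in Aset | hadj u w]|.
  move=> u; rewrite inE => /andP[ux cu].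
  apply: leq_trans (gd x u _ cu) _; first by rewrite eq_sym.
  apply: leq_trans (codeg_W u3' _) _; first by rewrite eq_sym.
  apply: subset_leq_card; apply/subsetP => w; rewrite !inE => /and3P[wx wu wH].
  rewrite wx /hadj ux wx wH (eq_sym u w) wu /= andbT.
  by apply: (cpos _ _ _ wH); rewrite !inE eqxx ?orbT.
have yA : y \in Aset by rewrite inE yx (cpos B0).
set k := #|V| - 1.
have kd : k <= d by rewrite /k /d; lia.
have kA : k < #|Aset|.
  have sub : [set w in Aset | hadj y w] \subset Aset :\ y.
    by apply/subsetP => w; rewrite !inE => /andP[-> /and4P[_ _ yw _]]; rewrite eq_sym yw.
  have := subset_leq_card sub; have := cardsD1 y Aset; rewrite yA.
  have := deg y yA; lia.
have deg' : forall u, u \in Aset -> k <= #|[set w in Aset | hadj u w]|.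
  by move=> u uA; apply: leq_trans kd (deg u uA).
have /cards2P[a [b [ab ee]]] : #|e| == 2 by rewrite ce.
set D := [set: V] :\ a.
have cD : #|D| <= k by have := cardsD1 a [set: V]; rewrite cardsT in_setT add1n /k -/D => ->; rewrite subSS subn0.
have rsym : symmetric (tadj ET) by move=> u w; rewrite /tadj setUC.
have rirr : irreflexive (tadj ET).
  move=> u; rewrite /tadj setUid; apply/negP => /ETe [].
  by rewrite cards1.
have [f0 [i0 a0 e0]] := forest_embed rsym rirr acyc hsym kA deg' cD.
have Da : forall v, v != a -> v \in D by move=> v va; rewrite !inE va.
have f0A : forall v, v != a -> f0 v \in Aset by move=> v va; apply: a0; apply: Da.
have f0x : forall v, v != a -> f0 v != x by move=> v /f0A; rewrite inE => /andP[].
set f := fun v => if v == a then x else f0 v.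
have finj : injective f.
  move=> v1 v2; rewrite /f.
  case: (eqVneq v1 a) => [->|v1a]; case: (eqVneq v2 a) => [->|v2a] //.
  - by move=> e'; move: (f0x v2 v2a); rewrite -e' eqxx.
  - by move=> e'; move: (f0x v1 v1a); rewrite e' eqxx.
  - by apply: i0; apply: Da.
have fa : f a = x by rewrite /f eqxx.
have fv : forall v, v != a -> f v = f0 v by move=> v va; rewrite /f (negbTE va).
have imf2 : forall u w, f @: [set u; w] = [set f u; f w].
  by move=> u w; rewrite imsetU1 imset_set1.
have cla : forall w, w != a -> exists p q, [/\ p != q, f @: [set a; w] = [set p; q] &
                                              0 < codeg H' p q].
  move=> w wa; exists x, (f0 w); rewrite imf2 fa fv //; split=> //.
    by rewrite eq_sym f0x.
  by move: (f0A w wa); rewrite inE => /andP[].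
have edges : forall A, A \in E -> exists p q, [/\ p != q, f @: A = [set p; q] &
                                              0 < codeg H' p q].
  move=> A; rewrite EE => /setU1P[->|AET].
    by rewrite ee; apply: cla; rewrite eq_sym.
  have /cards2P[u [w [uw eA]]] : #|A| == 2 by have [-> _] := ETe A AET.
  case: (eqVneq u a) => [ua|ua].
    by rewrite eA ua; apply: cla; rewrite -ua eq_sym.
  case: (eqVneq w a) => [wa|wa].
    by rewrite eA wa setUC; apply: cla.
  have rw : tadj ET u w by rewrite /tadj -eA.
  have := e0 u w (Da u ua) (Da w wa) rw; rewrite /hadj => /and4P[_ _ fuw tH].
  exists (f0 u), (f0 w); rewrite eA imf2 !fv //; split=> //.
  by apply: (cpos _ _ _ tH); rewrite !inE eqxx ?orbT.
have cE : #|E| = #|ET| + 1 by rewrite EE cardsU1 eET addnC.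
have hyp : forall A, A \in E -> exists p q, [/\ p != q, f @: A = [set p; q] &
    #|V| + #|E| <= #|Wt H' p q| + 1].
  move=> A AE; have [p [q [pq fA cp]]] := edges A AE; exists p, q; split=> //.
  have := gd p q pq cp; have := codeg_W u3' pq; rewrite cE /d; lia.
have [g [gi g1 g2]] := pick_thirds x hyp.
pose F : {ffun exp_vert E -> 'I_n} :=
  [ffun z : exp_vert E => match z with inl v => f v | inr a' => g a' end].
apply/existsP; exists F; apply/andP; split.
- apply/injectiveP => z1 z2; rewrite !ffunE; case: z1 => [v1|a1]; case: z2 => [v2|a2].
  + by move/finj => ->.
  + by move=> e'; move: (g1 a2); rewrite -e' imset_f // inE.
  + by move=> e'; move: (g1 a1); rewrite e' imset_f // inE.
  + by move/gi => ->.
- apply/forall_inP => A /imsetP[a' _ ->].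
  rewrite imsetU imset_set1 ffunE -imset_comp.
  have -> : [set (F \o inl) v | v in val a'] = f @: val a'.
    by apply: eq_imset => v; rewrite /= ffunE.
  exact: (subsetP sH) (g2 a').
Qed.

Theorem proposition4p1 (V : finType) (E : {set {set V}})
    (VT : {set V}) (ET : {set {set V}}) :
  is_augmentation E VT ET ->
  exists N : nat, forall n : nat, N <= n ->
    ex3 (expansion E) n <= 3 * (#|ET| + 1) * n ^ 2.
Proof.
move=> aug; exists 0 => n _; apply/bigmax_leqP => H /andP[u3 nc].
rewrite leqNgt; apply/negP => big; move/negP: nc; apply.
exact: embed_main aug u3 big.
Qed.
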